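(* Let $n\ge 3$ and let $K$ be a proper $4$-coloring of $H_2(n,n-1)$. (1) If $T(K)=\{(x,y): x+y\in\{f_i,f_j\}\}$ for some $1\le i<j\le n$, then $K$ is the $(i,j)$-coordinate coloring (up to renaming of colors), i.e. its color classes are the four sets $\{x\in\mathbb{Z}_2^n: (x_i,x_j)=(a,b)\}$, $a,b\in\mathbb{Z}_2$. (2) If $T(K)=\{(x,y): x+y\in\{\mathbb{1},f_j\}\}$ for some $j\in\{1,\dots,n\}$, then $n$ is even and the color classes of $K$ are the four sets $\mathcal{A}^{\nu}_{\mu}=\{v\in\mathbb{Z}_2^n: \mathrm{wt}(v)\equiv \nu \pmod 2,\ v_j=\mu\}$, $\nu,\mu\in\{0,1\}$. As a consequence, every proper $4$-coloring $K$ of $H_2(n,n-1)$ with $\mathrm{rb}(K)=\frac{2}{n+1}$ is even.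
   Context: $H_2(n,n-1)$ is the simple undirected graph with vertex set $\mathbb{Z}_2^n$ in which $x,y$ are adjacent iff their Hamming distance is at least $n-1$; $\mathrm{wt}$ is Hamming weight. $e_k$ is the $k$-th standard basis vector, $\mathbb{1}$ the all-ones vector, $f_k=e_k+\mathbb{1}$. For a proper $k$-coloring $K$ of a simple graph $G=(V,E)$, an edge $(x,y)$ is a transition edge if swapping the colors of $x$ and $y$ (all other colors unchanged) yields again a proper $k$-coloring; $T(K)$ is the set of transition edges and $\mathrm{rb}(K)=|T(K)|/|E|$. A coloring is even if all color classes have the same cardinality. *)

(* Defs.v *)
From mathcomp Require Import all_boot all_order all_algebra.
Set Implicit Arguments. Unset Strict Implicit. Unset Printing Implicit Defensive.
Import GRing.Theory Num.Theory.

(* Vertices of H_2(n,n-1): Z_2^n as boolean vectors indexed by 'I_n. *)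
Definition vtx (n : nat) := {ffun 'I_n -> bool}.

Definition vadd n (x y : vtx n) : vtx n := [ffun k => x k (+) y k].
Definition evec n (k : 'I_n) : vtx n := [ffun m => m == k].
Definition one_vec n : vtx n := [ffun => true].
Definition fvec n (k : 'I_n) : vtx n := vadd (evec k) (one_vec n).

Definition wt n (x : vtx n) : nat := #|[set k | x k]|.
Definition hdist n (x y : vtx n) : nat := #|[set k | x k != y k]|.

Definition adj n (x y : vtx n) : bool := (x != y) && (n.-1 <= hdist x y).

Definition coloring n k := {ffun vtx n -> 'I_k}.

Definition proper_col n k (K : coloring n k) : bool :=
  [forall x, forall y, adj x y ==> (K x != K y)].

Definition swapc n k (K : coloring n k) (x y : vtx n) : coloring n k :=
  [ffun z => if z == x then K y else if z == y then K x else K z].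

Definition transition n k (K : coloring n k) (x y : vtx n) : bool :=
  adj x y && proper_col (swapc K x y).

Definition edges n : {set {set vtx n}} :=
  [set [set x; y] | x in vtx n, y in vtx n & adj x y].

Definition trans_edges n k (K : coloring n k) : {set {set vtx n}} :=
  [set [set x; y] | x in vtx n, y in vtx n & transition K x y].

Definition rb n k (K : coloring n k) : rat :=
  (#|trans_edges K|%:R / #|edges n|%:R)%R.

Definition color_classes n k (K : coloring n k) : {set {set vtx n}} :=
  [set [set x | K x == c] | c : 'I_k].

Definition even_coloring n k (K : coloring n k) : Prop :=
  forall c c' : 'I_k, #|[set x | K x == c]| = #|[set x | K x == c']|.

Definition edges_with_sum n (S : pred (vtx n)) : {set {set vtx n}} :=
  [set [set x; y] | x in vtx n, y in vtx n & adj x y && S (vadd x y)].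

(* Main.v *)
Require Import Defs.
From mathcomp Require Import all_boot all_order all_algebra.
From mathcomp Require Import zify.
Set Implicit Arguments. Unset Strict Implicit. Unset Printing Implicit Defensive.
Import GRing.Theory Num.Theory.


Section Basic.
Variable n : nat.
Implicit Types x y z s : vtx n.

Definition zero : vtx n := [ffun => false].

Lemma vaddC x y : vadd x y = vadd y x.
Proof. by apply/ffunP=> k; rewrite !ffunE addbC. Qed.
Lemma vaddA x y z : vadd x (vadd y z) = vadd (vadd x y) z.
Proof. by apply/ffunP=> k; rewrite !ffunE addbA. Qed.
Lemma vaddKv x y : vadd x (vadd x y) = y.
Proof. by apply/ffunP=> k; rewrite !ffunE addKb. Qed.
Lemma vaddxx x : vadd x x = zero.
Proof. by apply/ffunP=> k; rewrite !ffunE addbb. Qed.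
Lemma vaddx0 x : vadd x zero = x.
Proof. by apply/ffunP=> k; rewrite !ffunE addbF. Qed.
Lemma vadd_inj x y z : vadd x y = vadd x z -> y = z.
Proof. by move=> h; rewrite -(vaddKv x y) h vaddKv. Qed.
Lemma vadd_eq0 x y : (vadd x y == zero) = (x == y).
Proof.
apply/eqP/eqP=> [h|->]; last exact: vaddxx.
by rewrite -(vaddx0 x) -h vaddKv.
Qed.

Lemma hdistE x y : hdist x y = wt (vadd x y).
Proof. by apply: eq_card => k; rewrite !inE ffunE; case: (x k); case: (y k). Qed.

Definition gen s := (s != zero) && (n.-1 <= wt s).

Lemma adjE x y : adj x y = gen (vadd x y).
Proof. by rewrite /adj /gen hdistE vadd_eq0. Qed.

Lemma adj_sym x y : adj x y = adj y x.
Proof. by rewrite !adjE vaddC. Qed.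
Lemma adj_irr x : adj x x = false.
Proof. by rewrite /adj eqxx. Qed.

Lemma adj_vadd x s : adj x (vadd x s) = gen s.
Proof. by rewrite adjE vaddKv. Qed.

End Basic.


Section W.
Variable n : nat.
Implicit Types x y z s : vtx n.

Lemma wt_one : wt (one_vec n) = n.
Proof.
rewrite /wt (_ : [set k | one_vec n k] = setT) ?cardsT ?card_ord //.
by apply/setP=> k; rewrite !inE ffunE.
Qed.

Lemma fvecE (k m : 'I_n) : fvec k m = (m != k).
Proof. by rewrite /fvec !ffunE addbT. Qed.
Lemma evecE (k m : 'I_n) : evec k m = (m == k).
Proof. by rewrite ffunE. Qed.

Lemma wt_fvec (k : 'I_n) : wt (fvec k) = n.-1.
Proof.
rewrite /wt (_ : [set m | fvec k m] = ~: [set k]); last first.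
  by apply/setP=> m; rewrite !inE fvecE.
by rewrite cardsC1 card_ord.
Qed.

Lemma wt_evec (k : 'I_n) : wt (evec k) = 1.
Proof.
rewrite /wt (_ : [set m | evec k m] = [set k]) ?cards1 //.
by apply/setP=> m; rewrite !inE evecE.
Qed.

Lemma wt_vadd x y : wt (vadd x y) + 2 * #|[set k | x k && y k]| = wt x + wt y.
Proof.
rewrite /wt.
set X := [set k | x k]; set Y := [set k | y k].
have -> : [set k | x k && y k] = X :&: Y by apply/setP=> k; rewrite !inE.
have -> : [set k | vadd x y k] = (X :|: Y) :\: (X :&: Y).
  by apply/setP=> k; rewrite !inE ffunE; case: (x k); case: (y k).
rewrite -cardsUI cardsD (setIidPr _) ?subsetIl ?subsetUl //; last first.
  by apply: subset_trans (subsetIl _ _) (subsetUl _ _).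
have : #|X :&: Y| <= #|X :|: Y| by apply: subset_leq_card; apply: subset_trans (subsetIl _ _) (subsetUl _ _).
lia.
Qed.

Lemma odd_wt_vadd x y : odd (wt (vadd x y)) = odd (wt x) (+) odd (wt y).
Proof.
have := wt_vadd x y => /(congr1 odd). rewrite !oddD /= addbF addbb addbF => <-.
by [].
Qed.

Lemma one_neq0 : 0 < n -> one_vec n != zero n.
Proof.
case: n => // m _; apply/eqP => /ffunP/(_ ord0); rewrite !ffunE.
by [].
Qed.

Lemma fvec_neq0 (k : 'I_n) : 1 < n -> fvec k != zero n.
Proof.
move=> n2; apply/eqP => /ffunP h.
have [m hm] : exists m : 'I_n, m != k.
  case: (eqVneq k (Ordinal (ltnW n2))) => [e|ne]; last by exists (Ordinal (ltnW n2)); rewrite eq_sym.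
  have n1 : 1 < n by [].
  exists (Ordinal n1); apply/eqP => e2; move: e; rewrite -e2 => /(congr1 val) /=. by [].
by move: (h m); rewrite fvecE ffunE hm.
Qed.

Lemma genP s : 1 < n -> gen s = (s == one_vec n) || [exists k, s == fvec k].
Proof.
move=> n2; apply/idP/idP.
- case/andP=> _ hw.
  set Z := [set k | ~~ s k].
  have hZ : #|Z| + wt s = n.
    rewrite /wt (_ : Z = ~: [set k | s k]); last by apply/setP=> k; rewrite !inE.
    by rewrite addnC cardsC card_ord.
  have : #|Z| <= 1 by lia.
  rewrite leq_eqVlt ltnS leqn0 => /orP[/cards1P[k hk]| /eqP/cards0_eq hk].
    apply/orP; right; apply/existsP; exists k; apply/eqP/ffunP=> m.
    rewrite fvecE; move/setP: (hk) => /(_ m); rewrite !inE.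
    by case: (s m) => /= <-.
  apply/orP; left; apply/eqP/ffunP=> m; rewrite ffunE.
  move/setP: (hk) => /(_ m); rewrite !inE.
  by case: (s m).
- case/orP=> [/eqP->|/existsP[k /eqP->]]; rewrite /gen.
    by rewrite one_neq0 ?wt_one ?leq_pred //; lia.
  by rewrite fvec_neq0 // wt_fvec leqnn.
Qed.

End W.


Lemma proper_adj n k (K : coloring n k) : proper_col K -> forall x y, adj x y -> K x != K y.
Proof. by move=> /forallP hp x y; move/forallP: (hp x) => /(_ y)/implyP. Qed.

Section T.
Variables (n k : nat) (K : coloring n k).
Implicit Types x y z v s : vtx n.

Lemma trans_adj x y : transition K x y -> adj x y.
Proof. by case/andP. Qed.

Lemma trans_uniq x y v : transition K x y -> adj x v -> K v = K y -> v = y.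
Proof.
case/andP=> hxy hp hxv hK; case: (eqVneq v y) => // nvy.
have nvx : v != x by apply/eqP=> e; move: hxv; rewrite e adj_irr.
have := proper_adj hp hxv.
rewrite /swapc !ffunE eqxx (negbTE nvx) (negbTE nvy) hK.
by rewrite eqxx.
Qed.

Lemma trans_sym x y : transition K x y = transition K y x.
Proof.
rewrite /transition adj_sym; case: (eqVneq x y) => [->//|nxy].
congr (_ && proper_col _); apply/ffunP => z; rewrite !ffunE.
case: (eqVneq z x) => [->|nzx]; first by rewrite (negbTE nxy).
by [].
Qed.

End T.


Lemma set2_eq (T : finType) (a b x y : T) :
  [set a; b] = [set x; y] -> (a = x /\ b = y) \/ (a = y /\ b = x).
Proof.
move=> e.
have ha : a \in [set x; y] by rewrite -e !inE eqxx.
have hb : b \in [set x; y] by rewrite -e !inE eqxx orbT.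
have hx : x \in [set a; b] by rewrite e !inE eqxx.
have hy : y \in [set a; b] by rewrite e !inE eqxx orbT.
move: ha hb hx hy; rewrite !inE.
case/orP=> /eqP ea hb hx hy; subst a.
- case/orP: hy => /eqP ey; last by left.
  subst y; move: hb; rewrite orbb => /eqP ->; by left.
- case/orP: hx => /eqP ex; last by right.
  subst x; move: hb; rewrite orbb => /eqP ->; by right.
Qed.

Lemma sum_card_pairs (T : finType) (r : rel T) :
  \sum_x #|[set y | r x y]| = \sum_(p : T * T | r p.1 p.2) 1.
Proof.
rewrite [RHS]big_mkcond /= -(pair_big xpredT xpredT (fun x y => if r x y then 1 else 0)) /=.
apply: eq_bigr => x _; by rewrite -sum1dep_card big_mkcond.
Qed.

Lemma card_edges (T : finType) (r : rel T) : symmetric r -> irreflexive r ->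
  #|[set [set x; y] | x in T, y in T & r x y]| * 2 = \sum_x #|[set y | r x y]|.
Proof.
move=> rs ri; rewrite sum_card_pairs.
set E := [set [set x; y] | x in T, y in T & r x y].
rewrite (partition_big (fun p : T * T => [set p.1; p.2]) (mem E)) /=; last first.
  by move=> [x y] /= h; apply/imset2P; exists x y; rewrite ?inE.
rewrite -sum_nat_const; apply: eq_bigr => e /imset2P[x y _]; rewrite inE => /andP[_ hr] ->.
rewrite sum1_card.
rewrite (eq_card (B := mem [set (x, y); (y, x)])); last first.
  move=> [a b]; rewrite !inE /=; apply/idP/idP.
    case/andP=> hab /eqP /set2_eq [[e1 e2]|[e1 e2]]; simpl in *; subst; by rewrite eqxx ?orbT.
  case/orP=> /eqP [-> ->]; rewrite unfold_in /= ?hr ?eqxx //.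
  by rewrite rs hr setUC eqxx.
rewrite cards2; case: eqP => // [[e1 e2]].
by move: hr; rewrite e1 ri.
Qed.


Section Deg.
Variable n : nat.
Hypothesis n2 : 1 < n.
Implicit Types x y z s : vtx n.

Lemma fvec_inj : injective (@fvec n).
Proof.
move=> k k' /ffunP /(_ k); rewrite !fvecE eqxx /=.
by move/esym/negbFE/eqP.
Qed.

Lemma one_neq_fvec k : one_vec n != fvec k.
Proof. by apply/eqP => /ffunP /(_ k); rewrite fvecE ffunE eqxx. Qed.

Lemma card_gen : #|[set s : vtx n | gen s]| = n.+1.
Proof.
have -> : [set s : vtx n | gen s] = one_vec n |: [set fvec k | k : 'I_n].
  apply/setP=> s; rewrite !inE genP //; congr (_ || _).
  apply/existsP/imsetP => [[k /eqP ->]|[k _ ->]]; by exists k.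
rewrite cardsU1 card_imset; last exact: fvec_inj.
rewrite card_ord; case: imsetP => // [[k _ e]].
by move: (one_neq_fvec k); rewrite e eqxx.
Qed.

Lemma deg x : #|[set y | adj x y]| = n.+1.
Proof.
rewrite -card_gen -(card_imset _ (@vadd_inj n x)).
apply: eq_card => y; rewrite !inE; apply/imsetP/idP.
  by case=> z; rewrite inE adjE => h ->.
by move=> h; exists (vadd x y); rewrite ?inE ?adj_vadd // vaddKv.
Qed.

Lemma card_vtx : #|vtx n| = 2 ^ n.
Proof. by rewrite card_ffun card_bool card_ord. Qed.

Lemma card_E : #|edges n| * 2 = 2 ^ n * n.+1.
Proof.
rewrite /edges (card_edges (r := @adj n)); last 2 first.
- exact: adj_sym.
- exact: adj_irr.
under eq_bigr do rewrite deg.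
by rewrite sum_nat_const card_vtx.
Qed.

End Deg.


Lemma fourth (S : {set 'I_4}) u v : #|S| = 3 -> u \notin S -> v \notin S -> u = v.
Proof.
move=> hS hu hv.
have : #|~: S| = 1 by have := cardsC S; rewrite card_ord hS; lia.
move/eqP/cards1P => [w hw].
have : u \in ~: S by rewrite inE.
have : v \in ~: S by rewrite inE.
by rewrite hw !inE => /eqP -> /eqP ->.
Qed.

Lemma sum_bool (T : finType) (P : pred T) : \sum_y (P y : nat) = #|[set y | P y]|.
Proof. by rewrite -sum1dep_card [RHS]big_mkcond; apply: eq_bigr => y _; case: (P y). Qed.

Lemma dbl (T : finType) (P : pred T) (F : T -> T -> bool) :
  \sum_(x | P x) \sum_y (F x y : nat) = \sum_x \sum_y ((P x && F x y) : nat).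
Proof.
rewrite big_mkcond; apply: eq_bigr => x _; case: (P x) => //=.
by rewrite big1.
Qed.

Section P3.
Variables (n : nat) (K : coloring n 4).
Hypotheses (n3 : 2 < n) (pK : proper_col K).
Let n2 : 1 < n := ltnW n3.
Local Notation tr := (transition K).

Lemma inj_Y x : {in [set y | tr x y] &, injective K}.
Proof. by move=> y1 y2; rewrite !inE => h1 h2 e; exact: trans_uniq h2 (trans_adj h1) e. Qed.

Lemma KY_sub x : K @: [set y | tr x y] \subset [set c | c != K x].
Proof.
apply/subsetP => c /imsetP[y]; rewrite inE => hy ->.
by rewrite inE eq_sym (proper_adj pK (trans_adj hy)).
Qed.

Lemma t_le2 x : #|[set y | tr x y]| <= 2.
Proof.
set Y := [set y | tr x y].
have sub : K @: Y \subset _ := KY_sub x.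
have c3 : #|[set c : 'I_4 | c != K x]| = 3.
  rewrite (_ : [set c | c != K x] = [set~ K x]) ?cardsC1 ?card_ord //.
  by apply/setP => c; rewrite !inE.
have hY : #|Y| = #|K @: Y| by rewrite card_in_imset //; exact: inj_Y.
rewrite leqNgt; apply/negP => h3.
have e3 : #|Y| = 3 by have := subset_leq_card sub; rewrite c3 -hY; lia.
have eq : K @: Y = [set c | c != K x].
  by apply/eqP; rewrite eqEcard sub c3 -hY e3.
have : [set y | adj x y] \subset Y.
  apply/subsetP => v; rewrite inE => hv.
  have : K v \in K @: Y by rewrite eq inE eq_sym (proper_adj pK hv).
  case/imsetP => y hy e; move: (hy); rewrite inE => hy'.
  by rewrite (trans_uniq hy' hv e).
by move/subset_leq_card; rewrite deg // e3; lia.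
Qed.

Lemma card_trans : #|trans_edges K| * 2 = \sum_x #|[set y | tr x y]|.
Proof.
rewrite /trans_edges (card_edges (r := tr)) //.
- by move=> x y; rewrite trans_sym.
- by move=> x; apply/negbTE/negP => /trans_adj; rewrite adj_irr.
Qed.

Lemma t_eq2 : #|trans_edges K| = 2 ^ n -> forall x, #|[set y | tr x y]| = 2.
Proof.
move=> hT x0; apply/eqP; rewrite eqn_leq t_le2 /= leqNgt; apply/negP => hlt.
have hs := card_trans; rewrite hT (bigD1 x0) //= in hs.
have : \sum_(x | x != x0) #|[set y | tr x y]| <= \sum_(x | x != x0) 2.
  by apply: leq_sum => x _; exact: t_le2.
rewrite sum_nat_const cardC1 card_vtx //.
have : 0 < 2 ^ n by rewrite expn_gt0.
move: hs.
move=> hs0 hN hle; have h2 : 2 ^ n * 2 <= #|[set y | tr x0 y]| + (2 ^ n).-1 * 2 by rewrite hs0 leq_add2l. move: h2 hN hlt; rewrite -subn1 mulnBl; move: (2 ^ n) #|[set y | tr x0 y]| => N t; lia.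
Qed.

Lemma rb_card : rb K = (2%:R / (n.+1)%:R)%R -> #|trans_edges K| = 2 ^ n.
Proof.
have hE := card_E n2.
have hE0 : #|edges n| != 0.
  apply/eqP => e; move: hE; rewrite e mul0n => /esym/eqP; rewrite muln_eq0 expn_eq0 /=.
  by [].
rewrite /rb => /eqP; rewrite eqr_div ?pnatr_eq0 // -!natrM eqr_nat => /eqP h.
apply/eqP; rewrite -(eqn_pmul2r (ltn0Sn n)) h mulnC hE //.
Qed.

Section Even.
Hypothesis t2 : forall x, #|[set y | tr x y]| = 2.

Definition Qc (a b : 'I_4) := \sum_(x | K x == a) \sum_y ((tr x y && (K y == b)) : nat).
Definition Rc (a b : 'I_4) := \sum_(x | K x == a) \sum_y ((adj x y && ~~ tr x y && (K y == b)) : nat).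

Lemma Qsym a b : Qc a b = Qc b a.
Proof.
rewrite /Qc !(dbl (fun x => K x == _) (fun x y => tr x y && (K y == _))) exchange_big /=.
apply: eq_bigr => y _; apply: eq_bigr => x _; rewrite trans_sym.
by case: (K x == a); case: (K y == b); case: (tr y x).
Qed.

Lemma Rsym a b : Rc a b = Rc b a.
Proof.
rewrite /Rc !(dbl (fun x => K x == _) (fun x y => adj x y && ~~ tr x y && (K y == _))) exchange_big /=.
apply: eq_bigr => y _; apply: eq_bigr => x _; rewrite trans_sym adj_sym.
by case: (K x == a); case: (K y == b); case: (tr y x); case: (adj y x).
Qed.

Lemma perx x b : b != K x ->
  n.-1 * \sum_y ((tr x y && (K y == b)) : nat) +
  \sum_y ((adj x y && ~~ tr x y && (K y == b)) : nat) = n.-1.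
Proof.
move=> hb; rewrite !sum_bool.
set Y := [set y | tr x y].
case: (boolP [exists y, (y \in Y) && (K y == b)]).
- case/existsP => y0 /andP[hy0 /eqP eb]; rewrite inE in hy0.
  have e1 : [set y | tr x y && (K y == b)] = [set y0].
    apply/setP => y; rewrite !inE; apply/andP/eqP => [[h /eqP e]|->]; last by rewrite hy0 eb.
    by apply: trans_uniq hy0 (trans_adj h) _; rewrite e eb.
  have e0 : [set y | adj x y && ~~ tr x y && (K y == b)] = set0.
    apply/setP => y; rewrite !inE; apply/negbTE/negP => /andP[/andP[ha hn] /eqP e].
    have ey : y = y0 by apply: trans_uniq hy0 ha _; rewrite e eb.
    by move: hn; rewrite ey hy0.
  by rewrite e1 e0 cards1 cards0; lia.
- move=> hno.
  have e1 : [set y | tr x y && (K y == b)] = set0.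
    apply/setP => y; rewrite !inE; apply/negbTE/negP => h.
    by move/negP: hno; apply; apply/existsP; exists y; rewrite inE.
  have hKY : #|K @: Y| = 2 by rewrite card_in_imset ?t2 //; exact: inj_Y.
  have nKx : K x \notin K @: Y.
    apply/negP => /(subsetP (KY_sub x)); by rewrite inE eqxx.
  have cS : #|K x |: (K @: Y)| = 3 by rewrite cardsU1 nKx hKY.
  have e2 : [set y | adj x y && ~~ tr x y && (K y == b)] = [set y | adj x y] :\: Y.
    apply/setP => y; rewrite !inE; apply/idP/idP.
      by case/andP => /andP [ha hn] _; rewrite hn ha.
    case/andP => hn ha; rewrite ha hn /=; apply/eqP.
    apply: (fourth cS).
    + rewrite !inE negb_or eq_sym (proper_adj pK ha) /=.
      apply/imsetP => [[y' hy' e]]; move: (hy'); rewrite inE => hy''.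
      by move: hn; rewrite (trans_uniq hy'' ha e) hy''.
    + rewrite !inE negb_or hb /=.
      apply/imsetP => [[y' hy' e]]; move/negP: hno; apply; apply/existsP; exists y'.
      by rewrite hy' -e eqxx.
  have sY : Y \subset [set y | adj x y].
    by apply/subsetP => y; rewrite !inE => /trans_adj.
  rewrite e1 e2 cards0 cardsDS // deg // t2; lia.
Qed.

Lemma sumA a b : b != a ->
  n.-1 * Qc a b + Rc a b = #|[set x | K x == a]| * n.-1.
Proof.
move=> hab.
rewrite /Qc /Rc big_distrr /= -big_split /= -sum1dep_card big_distrl /=.
apply: eq_bigr => x /eqP hx; rewrite mul1n; apply: perx; by rewrite hx.
Qed.

Lemma even_of_t2 : even_coloring K.
Proof.
move=> a b; case: (eqVneq a b) => [->//|hab].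
have h1 := sumA hab; rewrite eq_sym in hab; have h2 := sumA hab.
rewrite Qsym Rsym h2 in h1.
apply/eqP; rewrite -(@eqn_pmul2r n.-1); last by lia.
by rewrite h1.
Qed.

End Even.

Lemma part3 : rb K = (2%:R / (n.+1)%:R)%R -> even_coloring K.
Proof. by move/rb_card/t_eq2; exact: even_of_t2. Qed.

End P3.


Section Gen.
Variables (n : nat) (K : coloring n 4).
Hypotheses (pK : proper_col K).
Local Notation tr := (transition K).
Implicit Types x y z s g h : vtx n.

Lemma trans_char (S : pred (vtx n)) : trans_edges K = edges_with_sum S ->
  forall x y, tr x y = adj x y && S (vadd x y).
Proof.
move=> e x y; apply/idP/idP => h.
- have : [set x; y] \in trans_edges K by apply/imset2P; exists x y; rewrite ?inE.
  rewrite e => /imset2P[x' y' _]; rewrite inE => /andP[_ h'] /set2_eq [[-> ->]|[-> ->]] //.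
  by rewrite adj_sym vaddC.
- have : [set x; y] \in edges_with_sum S by apply/imset2P; exists x y; rewrite ?inE.
  rewrite -e => /imset2P[x' y' _]; rewrite inE => h' /set2_eq [[-> ->]|[-> ->]] //.
  by rewrite trans_sym.
Qed.

Lemma quad x g1 g2 h : tr x (vadd x g1) -> tr x (vadd x g2) -> adj x (vadd x h) ->
  ~~ tr x (vadd x h) -> g1 != g2 ->
  K x != K (vadd x g1) /\ K x != K (vadd x g2) /\ K x != K (vadd x h) /\
      K (vadd x g1) != K (vadd x g2) /\ K (vadd x h) != K (vadd x g1)
    /\ K (vadd x h) != K (vadd x g2).
Proof.
move=> t1 t2 ah nth ng; split; [|split; [|split; [|split; [|split]]]].
- by have := proper_adj pK (trans_adj t1).
- by have := proper_adj pK (trans_adj t2).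
- by have := proper_adj pK ah.
- apply/eqP => e; move/eqP: ng; apply.
  by apply: (@vadd_inj _ x); apply/esym/(trans_uniq t1 (trans_adj t2)); rewrite e.
- apply/eqP => e; have := trans_uniq t1 ah e; move=> ee; by rewrite ee t1 in nth.
- apply/eqP => e; have := trans_uniq t2 ah e; move=> ee; by rewrite ee t2 in nth.
Qed.

Lemma same4 x g1 g2 h h' : tr x (vadd x g1) -> tr x (vadd x g2) -> g1 != g2 ->
  adj x (vadd x h) -> ~~ tr x (vadd x h) ->
  adj x (vadd x h') -> ~~ tr x (vadd x h') ->
  K (vadd x h) = K (vadd x h').
Proof.
move=> t1 t2 ng a1 n1 a2 n2.
have [d1 [d2 [d3 [d4 [d5 d6]]]]] := quad t1 t2 a1 n1 ng.
have [_ [_ [e3 [_ [e5 e6]]]]] := quad t1 t2 a2 n2 ng.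
apply: (@fourth (K x |: [set K (vadd x g1); K (vadd x g2)])).
- rewrite cardsU1 cards2 d4 !inE negb_or d1 d2 //.
- by rewrite !inE !negb_or eq_sym d3 d5 d6.
- by rewrite !inE !negb_or eq_sym e3 e5 e6.
Qed.

Lemma reduce (F : vtx n -> 'I_4) (Z : pred 'I_n) (r : vtx n -> vtx n) :
  (forall x m, ~~ Z m -> x m -> exists x', [/\ F x = F x', r x' = r x, x' m = false &
       forall m', ~~ Z m' -> m' != m -> x' m' = x m']) ->
  (forall x, (forall m, ~~ Z m -> x m = false) -> r x = x) ->
  forall x, F x = F (r x).
Proof.
move=> step base x.
suff H : forall N x, #|[set m | x m && ~~ Z m]| <= N -> F x = F (r x).
  exact: (H _ x (leqnn _)).
clear x; elim=> [|N IH] x hx.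
  rewrite base //; move=> m hm; apply/negbTE/negP => xm.
  have : m \in [set m | x m && ~~ Z m] by rewrite inE xm hm.
  by move: hx; rewrite leqn0 => /eqP/cards0_eq ->; rewrite inE.
case: (boolP [exists m, x m && ~~ Z m]) => [/existsP[m /andP[xm zm]]|hno].
  have [x' [e1 e2 e3 e4]] := step x m zm xm.
  rewrite e1 -e2; apply: IH.
  have : #|[set m | x' m && ~~ Z m]| < #|[set m | x m && ~~ Z m]|.
    apply: proper_card; apply/properP; split.
      apply/subsetP => m'; rewrite !inE => /andP[x'm zm'].
      case: (eqVneq m' m) => [em|nm]; first by move: x'm; rewrite em e3.
      by rewrite -e4 // x'm zm'.
    by exists m; rewrite !inE ?xm ?zm ?e3.
  lia.
rewrite base // => m zm; apply/negbTE/negP => xm; move/negP: hno; apply.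
by apply/existsP; exists m; rewrite xm zm.
Qed.

Lemma classes (key : vtx n -> bool * bool) (phi : bool * bool -> 'I_4)
  (P : bool -> bool -> {set vtx n}) :
  injective phi -> (forall x, K x = phi (key x)) ->
  (forall a b, P a b = [set x | key x == (a, b)]) ->
  color_classes K = [set P a b | a : bool, b : bool].
Proof.
move=> iphi hK hP.
have hc : forall p, [set x | K x == phi p] = [set x | key x == p].
  by move=> p; apply/setP => x; rewrite !inE hK (inj_eq iphi).
apply/setP => C; apply/imsetP/imset2P.
- case=> c _ ->.
  have : c \in codom phi by apply: inj_card_onto => //; rewrite card_prod card_bool card_ord.
  case/codomP => [[a b] ->]; exists a b; rewrite ?inE // hP hc //.
- case=> a b _ _ ->; exists (phi (a, b)) => //; by rewrite hP hc.
Qed.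

End Gen.


Lemma gen_one n : 1 < n -> gen (one_vec n).
Proof. by move=> h; rewrite genP // eqxx. Qed.
Lemma gen_f n (k : 'I_n) : 1 < n -> gen (fvec k).
Proof. by move=> h; rewrite genP // orbC; apply/orP; left; apply/existsP; exists k. Qed.

Lemma vadd_one2 n (z : vtx n) : vadd (vadd z (one_vec n)) (one_vec n) = z.
Proof. by rewrite -vaddA vaddxx vaddx0. Qed.
Lemma vadd_one_f n (z : vtx n) m : vadd (vadd z (one_vec n)) (fvec m) = vadd z (evec m).
Proof. by apply/ffunP=> k; rewrite !ffunE; case: (z k); case: (k == m). Qed.

Lemma vaddE n (x y : vtx n) k : vadd x y k = x k (+) y k.
Proof. by rewrite ffunE. Qed.
Lemma oneE n k : one_vec n k = true.
Proof. by rewrite ffunE. Qed.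

Section P1.
Variables (n : nat) (K : coloring n 4).
Hypotheses (n3 : 2 < n) (pK : proper_col K).
Let n2 : 1 < n := ltnW n3.
Local Notation tr := (transition K).
Variables (i j : 'I_n).
Hypothesis hij : i < j.
Hypothesis hT : trans_edges K = edges_with_sum [pred s | (s == fvec i) || (s == fvec j)].

Let nij : i != j. Proof. by rewrite neq_ltn hij. Qed.

Lemma trg1 x s : tr x (vadd x s) = gen s && ((s == fvec i) || (s == fvec j)).
Proof. by rewrite (trans_char hT) adj_vadd vaddKv. Qed.

Lemma S1one : ((one_vec n == fvec i) || (one_vec n == fvec j)) = false.
Proof. by rewrite (negbTE (one_neq_fvec _)) (negbTE (one_neq_fvec _)). Qed.

Lemma S1f m : ((fvec m == fvec i) || (fvec m == fvec j)) = (m == i) || (m == j).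
Proof. by rewrite !(inj_eq (@fvec_inj n)). Qed.

Lemma inv1 z m : m != i -> m != j -> K z = K (vadd z (evec m)).
Proof.
move=> mi mj; set x := vadd z (one_vec n).
rewrite -{1}(vadd_one2 z) -vadd_one_f -/x.
apply: (@same4 _ _ pK x (fvec i) (fvec j)).
- by rewrite trg1 gen_f // eqxx.
- by rewrite trg1 gen_f // eqxx orbT.
- by rewrite (inj_eq (@fvec_inj n)).
- by rewrite adj_vadd gen_one.
- by rewrite trg1 S1one andbF.
- by rewrite adj_vadd gen_f.
- by rewrite trg1 S1f (negbTE mi) (negbTE mj) andbF.
Qed.

Definition base1 (a b : bool) : vtx n := [ffun m => if m == i then a else if m == j then b else false].

Lemma base1_i a b : base1 a b i = a. Proof. by rewrite ffunE eqxx. Qed.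
Lemma base1_j a b : base1 a b j = b. Proof. by rewrite ffunE eq_sym (negbTE nij) eqxx. Qed.

Lemma red1 x : K x = K (base1 (x i) (x j)).
Proof.
apply: (@reduce n K pK K (fun m => (m == i) || (m == j)) (fun x => base1 (x i) (x j))).
- move=> y m; rewrite negb_or => /andP[mi mj] ym.
  exists (vadd y (evec m)); split.
  + exact: inv1.
  + by rewrite !ffunE ![_ == m]eq_sym (negbTE mi) (negbTE mj) !addbF.
  + by rewrite !ffunE eqxx ym.
  + by move=> m' _ nm; rewrite !ffunE (negbTE nm) addbF.
- move=> y hy; apply/ffunP => m; rewrite ffunE.
  case: (eqVneq m i) => [->//|mi]; case: (eqVneq m j) => [->//|mj].
  by rewrite hy // negb_or mi mj.
Qed.

Definition phi1 (p : bool * bool) := K (base1 p.1 p.2).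
Definition key1 (x : vtx n) := (x i, x j).

Lemma hK1 x : K x = phi1 (key1 x). Proof. exact: red1. Qed.

Lemma phi1_inj : injective phi1.
Proof.
have H : forall a b, [/\ phi1 (a, b) != phi1 (a, ~~ b), phi1 (a, b) != phi1 (~~ a, b)
                        & phi1 (a, b) != phi1 (~~ a, ~~ b)].
  move=> a b; set u := base1 a b.
  have ku : phi1 (a, b) = K u by rewrite /phi1.
  have t1 : tr u (vadd u (fvec i)) by rewrite trg1 gen_f // eqxx.
  have t2 : tr u (vadd u (fvec j)) by rewrite trg1 gen_f // eqxx orbT.
  have a1 : adj u (vadd u (one_vec n)) by rewrite adj_vadd gen_one.
  have n1 : ~~ tr u (vadd u (one_vec n)) by rewrite trg1 S1one andbF.
  have ng : fvec i != fvec j by rewrite (inj_eq (@fvec_inj n)).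
  have [d1 [d2 [d3 _]]] := quad pK t1 t2 a1 n1 ng.
  have nji : (j == i) = false by rewrite eq_sym (negbTE nij).
  move: d1 d2 d3; rewrite !hK1 /key1 !vaddE /u !base1_i !base1_j !evecE !oneE !eqxx (negbTE nij) nji /= !addbF !addbT.

  by move=> d1 d2 d3; split.
move=> [a b] [a' b'] e.
have [h1 h2 h3] := H a b.
move: h1 h2 h3 e; case: a; case: b; case: a'; case: b' => //= h1 h2 h3 e;
  by [rewrite e eqxx in h1 | rewrite e eqxx in h2 | rewrite e eqxx in h3].
Qed.

Lemma part1 : color_classes K =
       [set [set x : vtx n | (x i == a) && (x j == b)] | a : bool, b : bool].
Proof.
apply: (classes phi1_inj hK1) => a b.
by apply/setP => x; rewrite !inE.
Qed.

End P1.


Lemma ev_or n (b : bool) (k m : 'I_n) : (if b then evec k else zero n) m = b && (m == k).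
Proof. by case: b; rewrite ffunE. Qed.

Lemma wt_ev n (b : bool) (k : 'I_n) : odd (wt (if b then evec k else zero n)) = b.
Proof.
case: b; first by rewrite wt_evec.
rewrite /wt (_ : [set m | zero n m] = set0) ?cards0 //.
by apply/setP => m; rewrite !inE ffunE.
Qed.

Section P2.
Variables (n : nat) (K : coloring n 4).
Hypotheses (n3 : 2 < n) (pK : proper_col K).
Let n2 : 1 < n := ltnW n3.
Local Notation tr := (transition K).
Variables (j k0 : 'I_n).
Hypothesis nk0 : k0 != j.
Hypothesis hT : trans_edges K = edges_with_sum [pred s | (s == one_vec n) || (s == fvec j)].

Let nj0 : (j == k0) = false. Proof. by rewrite eq_sym (negbTE nk0). Qed.
Let n0j : (k0 == j) = false. Proof. by rewrite (negbTE nk0). Qed.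

Lemma trg2 (x s : vtx n) : tr x (vadd x s) = gen s && ((s == one_vec n) || (s == fvec j)).
Proof. by rewrite (trans_char hT) adj_vadd vaddKv. Qed.

Lemma S2f (m : 'I_n) : ((fvec m == one_vec n) || (fvec m == fvec j)) = (m == j).
Proof. by rewrite eq_sym (negbTE (one_neq_fvec _)) (inj_eq (@fvec_inj n)). Qed.

Lemma t2one (x : vtx n) : tr x (vadd x (one_vec n)).
Proof. by rewrite trg2 gen_one // eqxx. Qed.
Lemma t2fj (x : vtx n) : tr x (vadd x (fvec j)).
Proof. by rewrite trg2 gen_f // eqxx orbT. Qed.
Lemma ng2 : one_vec n != fvec j.
Proof. exact: one_neq_fvec. Qed.
Lemma a2f (x : vtx n) (m : 'I_n) : adj x (vadd x (fvec m)).
Proof. by rewrite adj_vadd gen_f. Qed.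
Lemma n2f (x : vtx n) (m : 'I_n) : m != j -> ~~ tr x (vadd x (fvec m)).
Proof. by move=> h; rewrite trg2 S2f (negbTE h) andbF. Qed.

Lemma inv2 (z : vtx n) (m : 'I_n) : m != j -> m != k0 -> K z = K (vadd z (vadd (evec m) (evec k0))).
Proof.
move=> mj mk; set x := vadd z (fvec m).
have e1 : vadd x (fvec m) = z by rewrite -vaddA vaddxx vaddx0.
have e2 : vadd x (fvec k0) = vadd z (vadd (evec m) (evec k0)).
  by apply/ffunP=> k; rewrite !ffunE; case: (z k); case: (k == m); case: (k == k0).
rewrite -{1}e1 -e2.
apply: (@same4 _ _ pK x (one_vec n) (fvec j)).
- exact: t2one.
- exact: t2fj.
- exact: ng2.
- exact: a2f.
- exact: n2f.
- exact: a2f.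
- exact: n2f.
Qed.

Definition base2 (nu mu : bool) : vtx n :=
  [ffun m => if m == j then mu else if m == k0 then nu (+) mu else false].

Lemma base2_j a b : base2 a b j = b. Proof. by rewrite ffunE eqxx. Qed.
Lemma base2_k0 a b : base2 a b k0 = a (+) b. Proof. by rewrite ffunE n0j eqxx. Qed.

Lemma r_base (y : vtx n) : (forall m, ~~ ((m == j) || (m == k0)) -> y m = false) ->
  base2 (odd (wt y)) (y j) = y.
Proof.
move=> hy.
have ey : y = vadd (if y j then evec j else zero n) (if y k0 then evec k0 else zero n).
  apply/ffunP => m; rewrite vaddE !ev_or.
  case: (eqVneq m j) => [->|mj]; first by rewrite nj0 andbT andbF addbF.
  case: (eqVneq m k0) => [->|mk]; first by rewrite andbF andbT.
  by rewrite !andbF addbF (hy m) // negb_or mj mk.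
have ow : odd (wt y) = y j (+) y k0 by rewrite {1}ey odd_wt_vadd !wt_ev.
apply/ffunP => m; rewrite ffunE ow.
case: (eqVneq m j) => [->//|mj]; case: (eqVneq m k0) => [->|mk].
  by rewrite addbC addKb.
by rewrite hy // negb_or mj mk.
Qed.

Lemma red2 (x : vtx n) : K x = K (base2 (odd (wt x)) (x j)).
Proof.
apply: (@reduce n K pK K (fun m => (m == j) || (m == k0)) (fun x => base2 (odd (wt x)) (x j))).
- move=> y m; rewrite negb_or => /andP[mj mk] ym.
  exists (vadd y (vadd (evec m) (evec k0))); split.
  + exact: inv2.
  + rewrite odd_wt_vadd odd_wt_vadd !wt_evec addbb addbF vaddE vaddE !evecE.
    have jm : (j == m) = false by rewrite eq_sym (negbTE mj).
    by rewrite jm nj0 !addbF.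
  + by rewrite vaddE vaddE !evecE eqxx (negbTE mk) ym.
  + move=> m' hm' nm; rewrite vaddE vaddE !evecE (negbTE nm); move: hm'; rewrite negb_or => /andP[_ /negbTE ->]. by rewrite !addbF.
- by move=> y hy; exact: r_base.
Qed.

Lemma key_base2 a b : odd (wt (base2 a b)) = a.
Proof.
have := r_base (y := base2 a b).
have hb : forall m, ~~ ((m == j) || (m == k0)) -> base2 a b m = false.
  by move=> m; rewrite negb_or ffunE => /andP[/negbTE -> /negbTE ->].
move=> /(_ hb) /ffunP /(_ k0); rewrite !base2_k0 base2_j.
by move/(congr1 (addb^~ b)); rewrite -!addbA addbb !addbF.
Qed.

Lemma n_even : ~~ odd n.
Proof.
apply/negP => hn.
have := proper_adj pK (trans_adj (t2fj (zero n))).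
rewrite red2 (red2 (vadd _ _)) vaddC vaddx0 wt_fvec.
have -> : odd n.-1 = false.
  move: hn; rewrite -{1}(prednK (ltnW n2)) /=.
  by case: (odd n.-1).
rewrite (_ : wt (zero n) = 0); last by rewrite /wt (_ : [set m | zero n m] = set0) ?cards0 //; apply/setP => m; rewrite !inE ffunE.
by rewrite fvecE eqxx ffunE eqxx.
Qed.

Definition phi2 (p : bool * bool) := K (base2 p.1 p.2).
Definition key2 (x : vtx n) := (odd (wt x), x j).

Lemma hK2 x : K x = phi2 (key2 x). Proof. exact: red2. Qed.

Lemma phi2_inj : injective phi2.
Proof.
have ev := n_even.
have on1 : odd n.-1.
  move: ev; rewrite -{1}(prednK (ltnW n2)) /=.
  by case: (odd n.-1).
have H : forall a b, [/\ phi2 (a, b) != phi2 (a, ~~ b), phi2 (a, b) != phi2 (~~ a, b)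
                        & phi2 (a, b) != phi2 (~~ a, ~~ b)].
  move=> a b; set u := base2 a b.
  have [d1 [d2 [d3 _]]] := quad pK (t2one u) (t2fj u) (a2f u k0) (n2f u nk0) ng2.
  move: d1 d2 d3; rewrite !hK2 /key2 !odd_wt_vadd !wt_evec wt_one /u key_base2 !vaddE base2_j !evecE !oneE eqxx nj0 (negbTE ev) /= !addbF !addbT.

  by move=> d1 d2 d3; split.
move=> [a b] [a' b'] e.
have [h1 h2 h3] := H a b.
move: h1 h2 h3 e; case: a; case: b; case: a'; case: b' => //= h1 h2 h3 e;
  by [rewrite e eqxx in h1 | rewrite e eqxx in h2 | rewrite e eqxx in h3].
Qed.

Lemma part2 : ~~ odd n /\ color_classes K =
       [set [set v : vtx n | (odd (wt v) == nu) && (v j == mu)] | nu : bool, mu : bool].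
Proof.
split; first exact: n_even.
apply: (classes phi2_inj hK2) => a b.
by apply/setP => x; rewrite !inE.
Qed.

End P2.


Theorem theorem5p3 (n : nat) (K : coloring n 4) :
  3 <= n -> proper_col K ->
  (forall i j : 'I_n, i < j ->
     trans_edges K = edges_with_sum [pred s | (s == fvec i) || (s == fvec j)] ->
     color_classes K =
       [set [set x : vtx n | (x i == a) && (x j == b)] | a : bool, b : bool])
  /\
  (forall j : 'I_n,
     trans_edges K = edges_with_sum [pred s | (s == one_vec n) || (s == fvec j)] ->
     ~~ odd n /\
     color_classes K =
       [set [set v : vtx n | (odd (wt v) == nu) && (v j == mu)] | nu : bool, mu : bool])
  /\
  (rb K = (2%:R / (n.+1)%:R)%R -> even_coloring K).
Proof.
move=> n3 pK; split; [|split].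
- by move=> i j hij hT; exact: (part1 n3 pK hij hT).
- move=> j hT.
  have [k0 hk0] : exists k0 : 'I_n, k0 != j.
    have h0 : 0 < n by apply: leq_trans n3.
    have h1 : 1 < n by apply: leq_trans n3.
    case: (eqVneq j (Ordinal h0)) => [e|ne]; last by exists (Ordinal h0); rewrite eq_sym.
    by exists (Ordinal h1); rewrite e; apply/eqP => /(congr1 val).
  exact: (part2 n3 pK hk0 hT).
- exact: (part3 n3 pK).
Qed.
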